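(* Regard the partially spherical subalgebra $e'H_pe'$ as a subring of $\mathscr K=\mathbb{C}(U_1,\dots,U_n)\star(T\rtimes S_n)$ via its action on $\mathbb{C}[U_1,\dots,U_n]$ described below. Then $e'H_pe'$ is a Galois $\mathbb{C}[U_1,\dots,U_n]$-ring in $\mathscr K$, i.e. it contains $\mathbb{C}[U_1,\dots,U_n]$ and $e'H_pe'\cdot\mathbb{C}(U_1,\dots,U_n)=\mathscr K=\mathbb{C}(U_1,\dots,U_n)\cdot e'H_pe'$.
   Context: Setting: $\ell,p,n$ positive integers, $p\mid\ell$, $\zeta=e^{2\pi i/\ell}$. $G(\ell,p,n)$ is the group of $n\times n$ monomial matrices with $\ell$-th root of unity entries whose product is an $(\ell/p)$-th root of unity. $H_p$ is the rational Cherednik algebra of $G(\ell,p,n)$ (quotient of $T(\mathfrak h\oplus\mathfrak h^* )\rtimes\mathbb{C}G(\ell,p,n)$, $\mathfrak h=\mathbb{C}^n$, by $[x,x']=0,[y,y']=0,[x,y]=\hbar\langle y,x\rangle-\sum_s c_s\langle\alpha_s,x\rangle\langle y,\alpha_s^\vee\rangle s$) with $\hbar\in\mathbb{C}^\times$, parameter $c$ on the reflections $t_i^kt_j^{-k}(i,j)$ and $c_m$ on $t_i^m$ (with $t_i=\mathrm{diag}(1,..,\zeta,..,1)$), where $c_m=0$ unless $p\mid m$. Put $h_r=\sum_{m=1}^{\ell-1}c_m\zeta^{rm}$ and $s_m=h_m+m\hbar$ for $m\in\mathbb{Z}$; then $s_{m+\ell/p}=s_m+\ell\hbar/p$. Let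 $A\subset G(\ell,p,n)$ be the subgroup of diagonal matrices and $e'=\frac1{|A|}\sum_{g\in A}g$; the partially spherical subalgebra is $e'H_pe'$. Skew ring: let $T\subset\mathbb{Z}^n$ be the lattice generated by $\ell e_1,\dots,\ell e_n$ and $\frac{\ell}{p}(e_1+\dots+e_n)$, acting on $\mathbb{C}(U_1,\dots,U_n)$ by $\mu_i(U_j)=U_j+\hbar\delta_{ij}$ ($\mu_i$ corresponding to $e_i$), and $S_n$ acting by permuting the $U_j$. $\mathscr K=\mathbb{C}(U)\star(T\rtimes S_n)$ is the free left $\mathbb{C}(U)$-module on $T\rtimes S_n$ with $(a\mu)(b\nu)=a\,\mu(b)\,\mu\nu$; it acts on $\mathbb{C}(U)$ by evaluation $(\sum a_\mu\mu)(f)=\sum a_\mu\mu(f)$. Embedding: $H_p$ has a faithful polynomial representation in which $e'H_pe'$ preserves a subspace identified with $\mathbb{C}[U_1,\dots,U_n]$; each element of $e'H_pe'$ acts there by the evaluation action of a unique element of $\mathscr K$, and $e'H_pe'$ is generated by elements acting by: multiplication by $U_i$; for $1\le i\le n-1$, $f\mapsto f^{w_i}+c\ell\frac{f^{w_i}-f}{U_{i+1}-U_i}$ ($w_i$ swapping $U_i,U_{i+1}$); $f\mapsto\prod_{m=0}^{\ell-1}(U_1+\ell\hbar-s_m)f(U_2,\dots,U_n,U_1+\ell\hbar)$; $f\mapsto f(U_n-\ell\hbar,U_1,\dots,U_{n-1})$; $f\mapsto\prod_{i=1}^n\prod_{m=0}^{\ell/p-1}(U_i+\ell\hbar/p-s_m)f(U_1+\ell\hbar/p,\dots,U_n+\ell\hbar/p)$;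 $f\mapsto f(U_1-\ell\hbar/p,\dots,U_n-\ell\hbar/p)$; and for $1\le i\le n-1$, $1\le j\le p-1$: $f\mapsto\prod_{r=1}^i\prod_{m=0}^{j\ell/p-1}(U_r+j\ell\hbar/p-s_m)\,f(U_{i+1}+j\ell\hbar/p-\ell\hbar,\dots,U_n+j\ell\hbar/p-\ell\hbar,U_1+j\ell\hbar/p,\dots,U_i+j\ell\hbar/p)$. A $\Gamma$-subring $\mathscr U\subseteq\mathscr K$ (with $\Gamma=\mathbb{C}[U]$, $K=\mathbb{C}(U)$) is a Galois $\Gamma$-ring if $\mathscr UK=\mathscr K=K\mathscr U$. *)

(* Defs.v *)
From HB Require Import structures.
From mathcomp Require Import all_boot all_order all_algebra all_fingroup.
From mathcomp Require Import generic_quotient fraction.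
From mathcomp Require Import mpoly.
Set Implicit Arguments. Unset Strict Implicit. Unset Printing Implicit Defensive.
Import Order.TTheory GRing.Theory Num.Theory.
Local Open Scope ring_scope.

Section Skew.
Variables (F : numClosedFieldType) (n : nat) (hb : F).

(* Gamma = F[U_1..U_n] (U_j is 'X_j, 0-based) and K = F(U_1..U_n). *)
Definition Gam := {mpoly F[n]}.
Definition KK := {fraction Gam}.

(* Group elements of Z^n x| S_n : a pair (t, s) acts on a function f by
   f |-> mu_t (s f), i.e. f(U_1..U_n) |-> f(U_{s 1} + t_{s 1} hb, ..., U_{s n} + t_{s n} hb),
   where s permutes the variables (s U_j = U_{s j}) and mu_t(U_j) = U_j + t_j hb. *)
Definition Grp := ({ffun 'I_n -> int} * {perm 'I_n})%type.

Definition gone : Grp := ([ffun=> 0%R], 1%g).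

(* composition: act (gmul g h) = act g \o act h *)
Definition gmul (g h : Grp) : Grp :=
  ([ffun i => g.1 i + h.1 ((g.2)^-1%g i)], (h.2 * g.2)%g).

Definition actP (g : Grp) (f : Gam) : Gam :=
  f \mPo [tuple ('X_(g.2 j) + ((g.1 (g.2 j))%:~R * hb)%:MP) | j < n].

Definition actK (g : Grp) (x : KK) : KK :=
  let r := repr x in tofrac (actP g \n_r) / tofrac (actP g \d_r).

(* Elements of the skew ring K * (Z^n x| S_n), represented as finite formal sums
   sum_i a_i g_i (a list of pairs), two lists representing the same element iff
   they have the same coefficient function. *)
Definition Kstar := seq (KK * Grp).

Definition coef (x : Kstar) (g : Grp) : KK := \sum_(a <- x | a.2 == g) a.1.

Definition keq (x y : Kstar) : Prop := forall g, coef x g = coef y g.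

Definition kadd (x y : Kstar) : Kstar := x ++ y.

(* (a mu)(b nu) = a mu(b) mu nu *)
Definition kmul (x y : Kstar) : Kstar :=
  [seq (a.1 * actK a.2 b.1, gmul a.2 b.2) | a <- x, b <- y].

Definition kembed (k : KK) : Kstar := [:: (k, gone)].

Definition ksum (s : seq Kstar) : Kstar := flatten s.

(* the lattice T generated by l e_1, ..., l e_n and (l/p)(e_1 + ... + e_n) *)
Definition inT (l p : nat) (t : {ffun 'I_n -> int}) : Prop :=
  exists (b : int) (a : 'I_n -> int),
    forall i, t i = a i * (l%:Z) + b * ((l %/ p)%N%:Z).

(* x lies in scr K = K * (T x| S_n) *)
Definition inKT (l p : nat) (x : Kstar) : Prop :=
  forall g, coef x g != 0 -> inT l p g.1.
End Skew.

Section Cherednik.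
Variables (F : numClosedFieldType) (l p n : nat) (zeta hb c : F) (cm : nat -> F).

Local Notation KK := (KK F n).
Local Notation Grp := (Grp n).
Local Notation Kstar := (Kstar F n).

Definition Ufr (i : 'I_n) : KK := tofrac ('X_i : {mpoly F[n]}).
Definition Cfr (a : F) : KK := tofrac (a%:MP : {mpoly F[n]}).

Definition hpar (r : nat) : F := \sum_(1 <= m < l) cm m * zeta ^+ (r * m).
Definition spar (m : nat) : F := hpar m + m%:R * hb.

Definition cyc : {perm 'I_n} := perm (@ordS_inj n).

Definition tconst (k : int) : {ffun 'I_n -> int} := [ffun=> k].

(* generators of e'H_p e', as elements of scr K (their evaluation action on
   F[U] is the one listed in the paper) *)
Inductive gen : Kstar -> Prop :=
  | gen_U (i : 'I_n) : gen [:: (Ufr i, gone n)]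
  (* f |-> f^{w_i} + c l (f^{w_i} - f)/(U_{i+1} - U_i) *)
  | gen_T (i j : 'I_n) : j = i.+1 :> nat ->
      gen [:: (1 + Cfr (c * l%:R) / (Ufr j - Ufr i), (tconst 0, tperm i j));
              (- (Cfr (c * l%:R) / (Ufr j - Ufr i)), gone n)]
  (* f |-> prod_{m<l} (U_1 + l hb - s_m) f(U_2,...,U_n,U_1 + l hb) *)
  | gen_X (i0 : 'I_n) : i0 = 0 :> nat ->
      gen [:: (\prod_(m < l) (Ufr i0 + Cfr (l%:R * hb - spar m)),
               ([ffun i => if i == i0 then l%:Z else 0], cyc))]
  (* f |-> f(U_n - l hb, U_1, ..., U_{n-1}) *)
  | gen_Y (i1 : 'I_n) : i1 = n.-1 :> nat ->
      gen [:: (1, ([ffun i => if i == i1 then - l%:Z else 0], (cyc^-1)%g))]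
  (* f |-> prod_i prod_{m < l/p} (U_i + l hb/p - s_m) f(U + l hb/p) *)
  | gen_P : gen [:: (\prod_(i < n) \prod_(m < l %/ p)
                       (Ufr i + Cfr ((l %/ p)%:R * hb - spar m)),
                     (tconst (l %/ p)%:Z, 1%g))]
  (* f |-> f(U - l hb/p) *)
  | gen_Q : gen [:: (1, (tconst (- (l %/ p)%:Z), 1%g))]
  | gen_R (i j : nat) : (1 <= i <= n.-1)%N -> (1 <= j <= p.-1)%N ->
      gen [:: (\prod_(r < n | (r < i)%N) \prod_(m < j * (l %/ p))
                 (Ufr r + Cfr ((j * (l %/ p))%:R * hb - spar m)),
               ([ffun r : 'I_n => (j * (l %/ p))%:Z - (if (i <= r)%N then l%:Z else 0)],
                (cyc ^+ i)%g))].

(* the subalgebra of scr K generated by the generators (the partially spherical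
   subalgebra e'H_p e' viewed inside scr K) *)
Inductive inU : Kstar -> Prop :=
  | inU_gen x : gen x -> inU x
  | inU_scal (a : F) : inU (kembed (Cfr a))
  | inU_add x y : inU x -> inU y -> inU (kadd x y)
  | inU_mul x y : inU x -> inU y -> inU (kmul hb x y)
  | inU_eq x y : inU x -> keq x y -> inU y.

End Cherednik.

(* Main.v *)
Require Import Defs.
From HB Require Import structures.
From mathcomp Require Import all_boot all_order all_algebra all_fingroup.
From mathcomp Require Import generic_quotient fraction.
From mathcomp Require Import mpoly.
From mathcomp Require Import ring zify.
From Stdlib Require Import Classical.
Set Implicit Arguments. Unset Strict Implicit. Unset Printing Implicit Defensive.
Import Order.TTheory GRing.Theory Num.Theory.
Local Open Scope ring_scope.

Section Frac.
Variable R : idomainType.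

Lemma pi_numden (r : {ratio R}) :
  \pi_({fraction R})%qT r = tofrac (\n_r) / tofrac (\d_r).
Proof.
have d0 := denom_ratioP r.
have d0' : tofrac \d_r != 0 :> {fraction R} by rewrite tofrac_eq0.
apply/(mulIf d0'); rewrite divfK // mulrC.
apply/eqP; rewrite !piE /FracField.mulf /= FracField.equivfE.
rewrite !numden_Ratio ?mulf_neq0 ?oner_neq0 //.
by rewrite !mulr1 mul1r mulrC.
Qed.

Lemma frac_numden (x : {fraction R}) :
  x = tofrac (\n_(repr x)) / tofrac (\d_(repr x)).
Proof. by rewrite -pi_numden reprK. Qed.

Lemma tofrac_inj : injective (@tofrac R).
Proof. by move=> a b /eqP; rewrite tofrac_eq => /eqP. Qed.

End Frac.

Section Sk.
Variables (F : numClosedFieldType) (n : nat) (hb : F).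
Local Notation G := (Grp n).
Local Notation KK := (KK F n).
Local Notation Kstar := (Kstar F n).
Local Notation actP := (@Defs.actP F n hb).
Local Notation actK := (@Defs.actK F n hb).
Local Notation kmul := (@Defs.kmul F n hb).
Local Notation gone := (Defs.gone n).
Local Notation coef := (@Defs.coef F n).

Lemma comp_comp (p : {mpoly F[n]}) (lq lr : n.-tuple {mpoly F[n]}) :
  (p \mPo lq) \mPo lr = p \mPo [tuple (tnth lq i \mPo lr) | i < n].
Proof.
rewrite (comp_mpolyEX p lq) [RHS]comp_mpolyEX raddf_sum /=; apply: eq_bigr => m _.
rewrite comp_mpolyZ !comp_mpolyX rmorph_prod /=; congr (_ *: _).
by apply: eq_bigr => i _; rewrite rmorphXn /= tnth_map tnth_ord_tuple.
Qed.

Lemma actP_comp (g h : G) f : actP g (actP h f) = actP (gmul g h) f.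
Proof.
rewrite /actP comp_comp; congr (f \mPo _); apply: eq_from_tnth => j.
rewrite !tnth_map !tnth_ord_tuple /= comp_mpolyD comp_mpolyXU comp_mpolyC.
rewrite -(tnth_nth 0) tnth_map tnth_ord_tuple /= ffunE permM -addrA -mpolyCD.
by rewrite permK intrD mulrDl addrC.
Qed.

Lemma actP_gone f : actP gone f = f.
Proof.
rewrite /actP -[RHS]comp_mpoly_id; congr (f \mPo _); apply: eq_from_tnth => j.
by rewrite !tnth_map !tnth_ord_tuple /= ffunE mul0r mpolyC0 addr0 perm1.
Qed.

Definition ginv (g : G) : G := ([ffun i => - g.1 (g.2 i)], (g.2)^-1%g).

Lemma gmulVg (g : G) : gmul (ginv g) g = gone.
Proof.
rewrite /gmul /gone /ginv /=; congr (_, _); last by rewrite mulgV.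
by apply/ffunP => i; rewrite !ffunE invgK addNr.
Qed.

Lemma gmulgV (g : G) : gmul g (ginv g) = gone.
Proof.
rewrite /gmul /gone /ginv /=; congr (_, _); last by rewrite mulVg.
by apply/ffunP => i; rewrite !ffunE permKV addrN.
Qed.

Lemma gmul1g (g : G) : gmul gone g = g.
Proof.
case: g => t s; rewrite /gmul /gone /=; congr (_, _); last by rewrite mulg1.
by apply/ffunP => i; rewrite !ffunE invg1 perm1 add0r.
Qed.

Lemma gmulg1 (g : G) : gmul g gone = g.
Proof.
case: g => t s; rewrite /gmul /gone /=; congr (_, _); last by rewrite mul1g.
by apply/ffunP => i; rewrite !ffunE addr0.
Qed.

Lemma actPK g f : actP (ginv g) (actP g f) = f.
Proof. by rewrite actP_comp gmulVg actP_gone. Qed.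

Lemma actPKV g f : actP g (actP (ginv g) f) = f.
Proof. by rewrite actP_comp gmulgV actP_gone. Qed.

Lemma actPM g a b : actP g (a * b) = actP g a * actP g b.
Proof. by rewrite /actP rmorphM. Qed.

Lemma actP_eq0 g f : (actP g f == 0) = (f == 0).
Proof.
apply/eqP/eqP => [e|->]; last by rewrite /actP comp_mpoly0.
by rewrite -(actPK g f) e /actP comp_mpoly0.
Qed.

Lemma fracE (x : KK) : exists a b, b != 0 /\ x = tofrac a / tofrac b.
Proof.
exists (\n_(repr x)), (\d_(repr x)); split; first exact: denom_ratioP.
exact: frac_numden.
Qed.

Lemma actK_frac (g : G) (a b : {mpoly F[n]}) : b != 0 ->
  actK g (tofrac a / tofrac b) = tofrac (actP g a) / tofrac (actP g b).
Proof.
move=> b0; rewrite /Defs.actK.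
set x := tofrac a / tofrac b; set r := repr x.
have e := frac_numden x; rewrite -/r in e.
have d0 := denom_ratioP r.
have tb0 : tofrac b != 0 :> KK by rewrite tofrac_eq0.
have td0 : tofrac \d_r != 0 :> KK by rewrite tofrac_eq0.
have E : a * \d_r = \n_r * b.
  apply/eqP; rewrite -tofrac_eq !tofracM -(eqr_div _ _ tb0 td0); apply/eqP; exact: e.
have tab0 : tofrac (actP g b) != 0 :> KK by rewrite tofrac_eq0 actP_eq0.
have tad0 : tofrac (actP g \d_r) != 0 :> KK by rewrite tofrac_eq0 actP_eq0.
apply/eqP; rewrite (eqr_div _ _ tad0 tab0) -!tofracM -!actPM -E.
exact: eqxx.
Qed.

Lemma actK_gone x : actK gone x = x.
Proof. by rewrite /Defs.actK /= !actP_gone -frac_numden. Qed.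

Lemma actKD (g : G) (x y : KK) : actK g (x + y) = actK g x + actK g y.
Proof.
have [a [b [b0 ->]]] := fracE x; have [c [d [d0 ->]]] := fracE y.
have tb0 : tofrac b != 0 :> KK by rewrite tofrac_eq0.
have td0 : tofrac d != 0 :> KK by rewrite tofrac_eq0.
have -> : tofrac a / tofrac b + tofrac c / tofrac d =
          tofrac (a * d + c * b) / tofrac (b * d) :> KK.
  by rewrite tofracD !tofracM (addf_div _ _ tb0 td0).
rewrite (actK_frac g (a * d + c * b) (mulf_neq0 b0 d0)) (actK_frac g a b0) (actK_frac g c d0).
rewrite !actPM /Defs.actP rmorphD /= -!/(Defs.actP _ _ _).
have tb1 : tofrac (actP g b) != 0 :> KK by rewrite tofrac_eq0 actP_eq0.
have td1 : tofrac (actP g d) != 0 :> KK by rewrite tofrac_eq0 actP_eq0.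
by rewrite tofracD !tofracM !actPM !tofracM (addf_div _ _ tb1 td1).
Qed.

Lemma actK0 g : actK g 0 = 0.
Proof. by apply/(addrI (actK g 0)); rewrite -actKD !addr0. Qed.

Lemma actK_sum g (I : Type) (r : seq I) (P : pred I) (f : I -> KK) :
  actK g (\sum_(i <- r | P i) f i) = \sum_(i <- r | P i) actK g (f i).
Proof. exact: (big_morph _ (actKD g) (actK0 g)). Qed.

Lemma actK_neq0 g x : x != 0 -> actK g x != 0.
Proof.
have [a [b [b0 ->]]] := fracE x => x0.
have a0 : a != 0.
  apply: contraNneq x0 => ->; rewrite tofrac0 mul0r; exact: eqxx.
rewrite (actK_frac g a b0) mulf_neq0 ?invr_eq0 ?tofrac_eq0 ?actP_eq0 ?a0 ?b0; by [].
Qed.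

Lemma actK_surj g y : exists x, actK g x = y.
Proof.
have [a [b [b0 ->]]] := fracE y.
have b1 : actP (ginv g) b != 0 by rewrite actP_eq0.
exists (tofrac (actP (ginv g) a) / tofrac (actP (ginv g) b)).
by rewrite (actK_frac g _ b1) !actPKV.
Qed.

Lemma coef_nil g : coef [::] g = 0.
Proof. by rewrite /Defs.coef big_nil. Qed.

Lemma coef_cons k g0 (x : Kstar) g :
  coef ((k, g0) :: x) g = (if g0 == g then k else 0) + coef x g.
Proof. by rewrite /Defs.coef big_cons /=; case: (g0 == g); rewrite ?add0r. Qed.

Lemma coef_cat (x y : Kstar) g : coef (x ++ y) g = coef x g + coef y g.
Proof. by rewrite /Defs.coef big_cat. Qed.

Lemma Gsum (x : Kstar) (f : G -> KK) (s : seq G) : uniq s ->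
  {subset [seq a.2 | a <- x] <= s} ->
  \sum_(a <- x) a.1 * f a.2 = \sum_(g <- s) coef x g * f g.
Proof.
move=> us sub.
under [RHS]eq_bigr do rewrite /Defs.coef big_distrl big_mkcond /=.
rewrite exchange_big /= big_seq [RHS]big_seq; apply: eq_bigr => a ax.
rewrite -big_mkcond /= -big_filter.
have as2 : a.2 \in s by apply: sub; apply: map_f.
rewrite (eq_filter (a2 := pred1 a.2)); last by move=> g /=; rewrite eq_sym.
by rewrite filter_pred1_uniq // big_seq1.
Qed.

Lemma Gsum_keq (x x' : Kstar) (f : G -> KK) : keq x x' ->
  \sum_(a <- x) a.1 * f a.2 = \sum_(a <- x') a.1 * f a.2.
Proof.
move=> e; set s := undup [seq a.2 | a <- x ++ x'].
have us : uniq s by exact: undup_uniq.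
rewrite (Gsum f us) ?(Gsum f us); first by apply: eq_bigr => g _; rewrite e.
- by move=> g gx; rewrite mem_undup map_cat mem_cat gx orbT.
- by move=> g gx; rewrite mem_undup map_cat mem_cat gx.
Qed.

Lemma sumP_keq (y y' : Kstar) (P : pred G) : keq y y' ->
  \sum_(b <- y | P b.2) b.1 = \sum_(b <- y' | P b.2) b.1.
Proof.
move=> e.
have E (z : Kstar) : \sum_(b <- z | P b.2) b.1 = \sum_(b <- z) b.1 * (P b.2)%:R.
  by rewrite big_mkcond; apply: eq_bigr => b _; case: (P b.2); rewrite ?mulr1 ?mulr0.
by rewrite !E; exact: (Gsum_keq (fun g => (P g)%:R) e).
Qed.

Lemma coef_kmul (x y : Kstar) g : coef (kmul x y) g =
  \sum_(a <- x) a.1 * actK a.2 (\sum_(b <- y | gmul a.2 b.2 == g) b.1).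
Proof.
rewrite /Defs.coef /Defs.kmul big_mkcond big_allpairs_dep /=.
apply: eq_bigr => a _; rewrite actK_sum mulr_sumr big_mkcond /=.
by rewrite [RHS]big_mkcond.
Qed.

Lemma keq_refl (x : Kstar) : keq x x. Proof. by []. Qed.
Lemma keq_sym (x y : Kstar) : keq x y -> keq y x. Proof. by move=> e g; rewrite e. Qed.
Lemma keq_trans (x y z : Kstar) : keq x y -> keq y z -> keq x z.
Proof. by move=> e1 e2 g; rewrite e1 e2. Qed.

Lemma kmul_keq_l (x x' y : Kstar) : keq x x' -> keq (kmul x y) (kmul x' y).
Proof.
move=> e g; rewrite !coef_kmul.
exact: (Gsum_keq (fun h => actK h (\sum_(b <- y | gmul h b.2 == g) b.1)) e).
Qed.

Lemma kmul_keq_r (x y y' : Kstar) : keq y y' -> keq (kmul x y) (kmul x y').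
Proof.
move=> e g; rewrite !coef_kmul; apply: eq_bigr => a _.
by rewrite (sumP_keq (fun h => gmul a.2 h == g) e).
Qed.

Lemma kadd_keq (x x' y y' : Kstar) : keq x x' -> keq y y' -> keq (kadd x y) (kadd x' y').
Proof. by move=> e1 e2 g; rewrite /kadd !coef_cat e1 e2. Qed.

Lemma sum_ind (y : Kstar) (P : pred G) :
  \sum_(b <- y | P b.2) b.1 = \sum_(g <- undup [seq b.2 | b <- y]) coef y g * (P g)%:R.
Proof.
rewrite -(Gsum (fun g => (P g)%:R) (undup_uniq _)); last by move=> h; rewrite mem_undup.
by rewrite big_mkcond; apply: eq_bigr => b _; case: (P b.2); rewrite ?mulr1 ?mulr0.
Qed.

Variables (l p : nat).

Lemma inT_gmul (g h : G) : inT l p g.1 -> inT l p h.1 -> inT l p (gmul g h).1.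
Proof.
move=> [b [a Ha]] [b' [a' Ha']]; exists (b + b'), (fun i => a i + a' ((g.2)^-1%g i)) => i.
rewrite /gmul /= ffunE Ha Ha'; ring.
Qed.

Lemma inKT_kmul (x y : Kstar) : inKT l p x -> inKT l p y -> inKT l p (kmul x y).
Proof.
move=> hx hy g nz; apply: NNPP => ngT; move: nz; apply/negP; rewrite negbK; apply/eqP.
rewrite coef_kmul (Gsum (fun h => actK h (\sum_(b <- y | gmul h b.2 == g) b.1)) (undup_uniq [seq a.2 | a <- x])); last by move=> h; rewrite mem_undup.
apply: big1 => g1 _.
case: (classic (inT l p g1.1)) => h1; last first.
  have [->|/hx h] := eqVneq (coef x g1) 0; [by rewrite mul0r | by case: h1].
rewrite (sum_ind y (fun h => gmul g1 h == g)) big1 ?actK0 ?mulr0 // => g2 _.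
case E: (gmul g1 g2 == g); last by rewrite mulr0.
have [->|/hy h] := eqVneq (coef y g2) 0; first by rewrite mul0r.
by case: ngT; rewrite -(eqP E); apply: inT_gmul.
Qed.

Lemma inKT_cat (x y : Kstar) : inKT l p x -> inKT l p y -> inKT l p (x ++ y).
Proof.
move=> hx hy g; rewrite coef_cat => nz.
have [e|/hx //] := eqVneq (coef x g) 0.
by apply: hy; rewrite e add0r in nz.
Qed.

Lemma inKT_keq (x y : Kstar) : inKT l p x -> keq x y -> inKT l p y.
Proof. by move=> hx e g; rewrite -e; apply: hx. Qed.

Lemma inKT_single (k : KK) (g0 : G) : inT l p g0.1 -> inKT l p [:: (k, g0)].
Proof.
move=> h g; rewrite coef_cons coef_nil addr0.
by case: (g0 =P g) => [<- _|_]; [exact: h | rewrite eqxx].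
Qed.
End Sk.

Section Ch.
Variables (F : numClosedFieldType) (l p n : nat) (zeta hb c : F) (cm : nat -> F).
Local Notation G := (Grp n).
Local Notation KK := (KK F n).
Local Notation Kstar := (Kstar F n).
Local Notation actK := (@Defs.actK F n hb).
Local Notation kmul := (@Defs.kmul F n hb).
Local Notation gone := (Defs.gone n).
Local Notation coef := (@Defs.coef F n).
Local Notation U := (@inU F l p n zeta hb c cm).

Lemma inT0 : inT l p (gone.1).
Proof. by exists 0, (fun _ => 0) => i; rewrite ffunE !mul0r addr0. Qed.

Lemma inT_tconst0 : inT l p (tconst n 0).
Proof. by exists 0, (fun _ => 0) => i; rewrite ffunE !mul0r addr0. Qed.

Lemma part1 u : U u -> inKT l p u.
Proof.
elim => [x gx | a | x y _ hx _ hy | x y _ hx _ hy | x y _ hx e].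
- case: gx.
  + move=> i; apply: inKT_single; exact: inT0.
  + move=> i j _; apply: (inKT_cat (x := [:: _]) (y := [:: _])); apply: inKT_single.
      exact: inT_tconst0.
    exact: inT0.
  + move=> i0 _; apply: inKT_single.
    exists 0, (fun i => if i == i0 then 1 else 0) => i; rewrite /= ffunE.
    by case: ifP; rewrite ?mul1r ?mul0r addr0.
  + move=> i1 _; apply: inKT_single.
    exists 0, (fun i => if i == i1 then -1 else 0) => i; rewrite /= ffunE.
    by case: ifP; rewrite ?mulN1r ?mul0r addr0.
  + apply: inKT_single.
    by exists 1, (fun _ => 0) => i; rewrite /= ffunE mul0r mul1r add0r.
  + apply: inKT_single.
    by exists (-1), (fun _ => 0) => i; rewrite /= ffunE mul0r mulN1r add0r.
  + move=> i j _ _; apply: inKT_single.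
    exists j%:Z, (fun r : 'I_n => if (i <= r)%N then -1 else 0) => r; rewrite /= ffunE PoszM.
    by case: ifP; rewrite ?mulN1r ?mul0r ?add0r ?subr0 // addrC.
- apply: inKT_single; exact: inT0.
- exact: inKT_cat.
- exact: inKT_kmul.
- exact: inKT_keq e.
Qed.

Definition Pq (q : {mpoly F[n]}) := exists u, U u /\ keq u (kembed (tofrac q)).

Lemma kmul_kembed (a b : KK) : kmul (kembed a) (kembed b) = kembed (a * b).
Proof. by rewrite /Defs.kmul /kembed /= actK_gone gmul1g. Qed.

Lemma Pq_add q1 q2 : Pq q1 -> Pq q2 -> Pq (q1 + q2).
Proof.
move=> [u1 [h1 e1]] [u2 [h2 e2]]; exists (kadd u1 u2); split; first exact: inU_add.
move=> g; rewrite /kadd coef_cat e1 e2 /kembed !coef_cons !coef_nil !addr0 tofracD.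
by case: ifP; rewrite ?addr0.
Qed.

Lemma Pq_mul q1 q2 : Pq q1 -> Pq q2 -> Pq (q1 * q2).
Proof.
move=> [u1 [h1 e1]] [u2 [h2 e2]]; exists (kmul u1 u2); split; first exact: inU_mul.
apply: (keq_trans (kmul_keq_l hb u2 e1)); apply: (keq_trans (kmul_keq_r hb _ e2)).
by rewrite kmul_kembed tofracM.
Qed.

Lemma Pq_C a : Pq a%:MP.
Proof. by exists (kembed (Cfr n a)); split; [exact: inU_scal | by []]. Qed.

Lemma Pq_X i : Pq 'X_i.
Proof. by exists [:: (Ufr F i, gone)]; split; [apply: inU_gen; exact: gen_U | by []]. Qed.

Lemma part2 q : Pq q.
Proof.
rewrite (mpolyE q); apply: (big_ind Pq); [exact: (Pq_C 0) | exact: Pq_add|].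
move=> m _; rewrite -mul_mpolyC; apply: Pq_mul; first exact: Pq_C.
rewrite mpolyXE_id; apply: (big_ind Pq); [exact: (Pq_C 1) | exact: Pq_mul|].
move=> i _; elim: (m i) => [|k ih]; first by rewrite expr0; exact: (Pq_C 1).
by rewrite exprS; apply: Pq_mul => //; exact: Pq_X.
Qed.

Definition single (g : G) := exists a : KK, a != 0 /\ U [:: (a, g)].

Lemma single1 : single gone.
Proof.
exists (Cfr n 1); split; last exact: inU_scal.
by rewrite /Cfr tofrac_eq0 mpolyC_eq0 oner_eq0.
Qed.

Lemma single_mul g h : single g -> single h -> single (gmul g h).
Proof.
move=> [a [a0 ua]] [b [b0 ub]]; exists (a * actK g b); split.
  exact: (mulf_neq0 a0 (actK_neq0 hb g b0)).
by have := inU_mul ua ub; rewrite /Defs.kmul /=.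
Qed.

Lemma XC_neq0 (i : 'I_n) x : Ufr F i + Cfr n x != 0.
Proof.
rewrite /Ufr /Cfr -tofracD tofrac_eq0; apply/eqP => /(congr1 (mcoeff U_(i))).
by rewrite mcoeffD mcoeffXU mcoeffC mnm1_eq0 eqxx mulr0 addr0 mcoeff0 => /eqP; rewrite oner_eq0.
Qed.

Lemma XXC_neq0 (i j : 'I_n) x : i != j -> Ufr F j - Ufr F i + Cfr n x != 0.
Proof.
move=> ij; rewrite /Ufr /Cfr -tofracB -tofracD tofrac_eq0; apply/eqP => /(congr1 (mcoeff U_(j))).
rewrite mcoeffD mcoeffB !mcoeffXU mcoeffC mnm1_eq0 eqxx (negbTE ij) mulr0 addr0 subr0 mcoeff0.
by move=> /eqP; rewrite oner_eq0.
Qed.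

Lemma single_T (i j : 'I_n) : j = i.+1 :> nat -> single (tconst n 0, tperm i j).
Proof.
move=> hj.
have ij : i != j by apply/eqP => E; move: hj; rewrite -E => /eqP; rewrite ltn_eqF.
set d := Ufr F j - Ufr F i; set C := Cfr n (c * l%:R).
have d0 : d != 0 by have := XXC_neq0 0 ij; rewrite /Cfr mpolyC0 tofrac0 addr0.
have [ud [hud ed]] := part2 ('X_j - 'X_i).
have hT := inU_gen (gen_T l p zeta hb c cm hj).
exists (d + C); split; first exact: XXC_neq0.
apply: (inU_eq (inU_add (inU_mul hud hT) (inU_scal l p n zeta hb c cm (c * l%:R)))).
apply: (keq_trans (kadd_keq (kmul_keq_l hb _ ed) (keq_refl _))).
move=> g; rewrite /kadd /Defs.kmul /= !actK_gone !gmul1g /kembed.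
rewrite !coef_cons !coef_nil !addr0 tofracB -/d -/C.
have -> : d * (1 + C / d) = d + C by rewrite mulrDr mulr1 mulrC divfK.
have -> : d * - (C / d) = - C by rewrite mulrN mulrC divfK.
by case: (gone == g); rewrite ?addNr ?addr0.
Qed.

Lemma single_X (i0 : 'I_n) : i0 = 0 :> nat ->
  single ([ffun i => if i == i0 then l%:Z else 0], cyc n).
Proof.
move=> h; eexists; split; last exact: (inU_gen (gen_X l p zeta hb c cm h)).
by apply/prodf_neq0 => m _; apply: XC_neq0.
Qed.

Lemma single_Y (i1 : 'I_n) : i1 = n.-1 :> nat ->
  single ([ffun i => if i == i1 then - l%:Z else 0], (cyc n)^-1%g).
Proof.
move=> h; eexists; split; last exact: (inU_gen (gen_Y l p zeta hb c cm h)).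
exact: oner_neq0.
Qed.

Lemma single_P : single (tconst n (l %/ p)%:Z, 1%g).
Proof.
eexists; split; last exact: (inU_gen (gen_P l p n zeta hb c cm)).
apply/prodf_neq0 => i _; apply/prodf_neq0 => m _; apply: XC_neq0.
Qed.

Lemma single_Q : single (tconst n (- (l %/ p)%:Z), 1%g).
Proof.
eexists; split; last exact: (inU_gen (gen_Q l p n zeta hb c cm)).
exact: oner_neq0.
Qed.

Definition S0 (s : {perm 'I_n}) := single (tconst n 0, s).

Lemma S0_mul s1 s2 : S0 s1 -> S0 s2 -> S0 (s1 * s2)%g.
Proof.
move=> h1 h2; have := single_mul h2 h1.
have -> : gmul (tconst n 0, s2) (tconst n 0, s1) = (tconst n 0, (s1 * s2)%g).
  by rewrite /gmul /=; congr (_, _); apply/ffunP => i; rewrite !ffunE addr0.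
by [].
Qed.

Lemma S0_1 : S0 1%g.
Proof. exact: single1. Qed.

Lemma S0_tperm_d d : forall i k : 'I_n, k = (i + d.+1)%N :> nat -> S0 (tperm i k).
Proof.
elim: d => [|d IH] i k hk; first by apply: single_T; rewrite hk addn1.
have mlt : (i + d.+1 < n)%N by have := ltn_ord k; rewrite hk; lia.
pose m := Ordinal mlt.
have h1 := IH i m erefl.
have h2 : S0 (tperm m k) by apply: single_T; rewrite hk /=; lia.
have mi : m != i by rewrite -val_eqE /=; apply/eqP; lia.
have ki : k != i by rewrite -val_eqE /= hk; apply/eqP; lia.
have -> : tperm i k = (tperm m k * tperm i m * tperm m k)%g.
  by rewrite -{1}(tpermV m k) -mulgA -conjgE tpermJ tpermL (tpermD mi ki).
exact: S0_mul (S0_mul h2 h1) h2.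
Qed.

Lemma S0_tperm (i k : 'I_n) : S0 (tperm i k).
Proof.
case: (ltngtP i k) => [lt|gt|eq].
- by apply: (S0_tperm_d (d := (k - i.+1)%N)); lia.
- by rewrite tpermC; apply: (S0_tperm_d (d := (i - k.+1)%N)); lia.
- have -> : i = k by apply: val_inj.
  by rewrite tperm1; exact: S0_1.
Qed.

Lemma S0_all s : S0 s.
Proof.
have [ts -> _] := prod_tpermP s.
elim: ts => [|t ts IH]; first by rewrite big_nil; exact: S0_1.
by rewrite big_cons; apply: S0_mul => //; exact: S0_tperm.
Qed.

Definition Tr (t : {ffun 'I_n -> int}) := single (t, 1%g).

Lemma Tr_eq (t1 t2 : {ffun 'I_n -> int}) : t1 =1 t2 -> Tr t1 -> Tr t2.
Proof. by move=> e; have -> : t1 = t2 by apply/ffunP. Qed.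

Lemma Tr_add (t1 t2 : {ffun 'I_n -> int}) : Tr t1 -> Tr t2 -> Tr [ffun i => t1 i + t2 i].
Proof.
move=> h1 h2; have := single_mul h1 h2.
have -> : gmul (t1, 1%g) (t2, 1%g) = ([ffun i => t1 i + t2 i], 1%g).
  by rewrite /gmul /=; congr (_, _); [apply/ffunP => i; rewrite !ffunE invg1 perm1 | rewrite mulg1].
by [].
Qed.

Lemma Tr_perm (t : {ffun 'I_n -> int}) (s : {perm 'I_n}) : Tr t -> Tr [ffun i => t ((s^-1)%g i)].
Proof.
move=> h; have := single_mul (S0_all s) (single_mul h (S0_all (s^-1)%g)).
have -> : gmul (tconst n 0, s) (gmul (t, 1%g) (tconst n 0, (s^-1)%g))
   = ([ffun i => t ((s^-1)%g i)], 1%g).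
  rewrite /gmul /=; congr (_, _); last by rewrite mulg1 mulVg.
  by apply/ffunP => i; rewrite !ffunE addr0 add0r.
by [].
Qed.

Lemma Tr0 : Tr [ffun=> 0].
Proof. exact: single1. Qed.

Lemma tperm_eqL (x y z : 'I_n) : (tperm x y z == x) = (z == y).
Proof.
case: tpermP => [->|->|zx zy]; first by rewrite eq_sym.
  by rewrite !eqxx.
by apply/eqP/eqP.
Qed.

Hypothesis n0 : (0 < n)%N.

Lemma Tr_e (i : 'I_n) : Tr [ffun j => if j == i then l%:Z else 0].
Proof.
pose i0 : 'I_n := Ordinal n0.
have hX : Tr [ffun j => if j == i0 then l%:Z else 0].
  have := single_mul (single_X (i0 := i0) erefl) (S0_all ((cyc n)^-1)%g).
  have -> : gmul ([ffun j => if j == i0 then l%:Z else 0], cyc n) (tconst n 0, ((cyc n)^-1)%g)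
     = ([ffun j => if j == i0 then l%:Z else 0], 1%g).
    rewrite /gmul /=; congr (_, _); last by rewrite mulVg.
    by apply/ffunP => j; rewrite !ffunE addr0.
  by [].
apply: (Tr_eq _ (Tr_perm (tperm i0 i) hX)) => j.
by rewrite !ffunE tpermV tperm_eqL.
Qed.

Lemma Tr_Ne (i : 'I_n) : Tr [ffun j => if j == i then - l%:Z else 0].
Proof.
have n1 : (n.-1 < n)%N by rewrite ltn_predL.
pose i1 : 'I_n := Ordinal n1.
have hY : Tr [ffun j => if j == i1 then - l%:Z else 0].
  have := single_mul (single_Y (i1 := i1) erefl) (S0_all (cyc n)).
  have -> : gmul ([ffun j => if j == i1 then - l%:Z else 0], ((cyc n)^-1)%g) (tconst n 0, cyc n)
     = ([ffun j => if j == i1 then - l%:Z else 0], 1%g).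
    rewrite /gmul /=; congr (_, _); last by rewrite mulgV.
    by apply/ffunP => j; rewrite !ffunE addr0.
  by [].
apply: (Tr_eq _ (Tr_perm (tperm i1 i) hY)) => j.
by rewrite !ffunE tpermV tperm_eqL.
Qed.

Lemma Tr_nmul (v : {ffun 'I_n -> int}) : Tr v -> forall m : nat, Tr [ffun i => m%:Z * v i].
Proof.
move=> h; elim => [|m IH].
  by apply: (Tr_eq _ Tr0) => i; rewrite !ffunE mul0r.
apply: (Tr_eq _ (Tr_add IH h)) => i; rewrite !ffunE.
by rewrite -addn1 PoszD mulrDl mul1r.
Qed.

Lemma Tr_zmul (v w : {ffun 'I_n -> int}) : Tr v -> Tr w -> (forall i, w i = - v i) ->
  forall z : int, Tr [ffun i => z * v i].
Proof.
move=> hv hw e [m|m]; first exact: Tr_nmul.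
apply: (Tr_eq _ (Tr_nmul hw m.+1)) => i; rewrite !ffunE e NegzE.
by rewrite mulrN mulNr.
Qed.

Lemma Tr_sum (I : Type) (r : seq I) (f : I -> {ffun 'I_n -> int}) :
  (forall i, Tr (f i)) -> Tr [ffun j => \sum_(i <- r) f i j].
Proof.
move=> h; elim: r => [|a r IH].
  by apply: (Tr_eq _ Tr0) => j; rewrite !ffunE big_nil.
by apply: (Tr_eq _ (Tr_add (h a) IH)) => j; rewrite !ffunE big_cons.
Qed.

Lemma Tr_T (t : {ffun 'I_n -> int}) : inT l p t -> Tr t.
Proof.
move=> [b [a Ha]].
have hP : Tr [ffun j => b * (tconst n (l %/ p)%:Z) j].
  apply: (Tr_zmul single_P single_Q) => i; by rewrite !ffunE.
have hE : Tr [ffun j => \sum_(i < n) [ffun j' => a i * [ffun j'' => if j'' == i then l%:Z else 0] j'] j].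
  apply: Tr_sum => i; apply: (Tr_zmul (Tr_e i) (Tr_Ne i)) => j; rewrite !ffunE.
  by case: ifP; rewrite ?oppr0.
apply: (Tr_eq _ (Tr_add hE hP)) => j; rewrite !ffunE Ha.
rewrite (bigD1 j) //= big1 ?ffunE ?eqxx ?addr0 //.
by move=> i ij; rewrite !ffunE eq_sym (negbTE ij) mulr0.
Qed.

Lemma single_all (g : G) : inT l p g.1 -> single g.
Proof.
case: g => t s /= ht; have := single_mul (Tr_T ht) (S0_all s).
have -> : gmul (t, 1%g) (tconst n 0, s) = (t, s).
  rewrite /gmul /=; congr (_, _); last by rewrite mulg1.
  by apply/ffunP => i; rewrite !ffunE addr0.
by [].
Qed.

Lemma coef_ksum_cons (x : Kstar) (r : seq Kstar) g :
  coef (ksum (x :: r)) g = coef x g + coef (ksum r) g.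
Proof. exact: coef_cat. Qed.

Lemma part3_aux (x : Kstar) : exists s : seq (Kstar * KK),
  (forall uk, uk \in s -> U uk.1) /\
  (forall g, inT l p g.1 -> coef (ksum [seq kmul uk.1 (kembed uk.2) | uk <- s]) g = coef x g) /\
  (forall g, ~ inT l p g.1 -> coef (ksum [seq kmul uk.1 (kembed uk.2) | uk <- s]) g = 0).
Proof.
elim: x => [|[k g0] x [s [hs [h1 h2]]]].
  by exists [::]; split => //; split => g _; rewrite /ksum /= !coef_nil.
case: (classic (inT l p g0.1)) => hg0.
  have [a [a0 ua]] := single_all hg0.
  have [k' ek'] := actK_surj hb g0 (k / a).
  exists (([:: (a, g0)], k') :: s); split.
    by move=> uk; rewrite in_cons => /predU1P [-> //|]; apply: hs.
  have E : kmul [:: (a, g0)] (kembed k') = [:: (k, g0)].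
    by rewrite /Defs.kmul /kembed /= gmulg1 ek' mulrC divfK.
  split => g hg; rewrite map_cons coef_ksum_cons E coef_cons coef_nil addr0.
    by rewrite h1 // coef_cons.
  rewrite h2 // addr0; case: (g0 =P g) => // e; by case: hg; rewrite -e.
exists s; split => //; split => g hg; last exact: h2.
rewrite coef_cons h1 //; case: (g0 =P g) => [e|_]; last by rewrite add0r.
by case: hg0; rewrite e.
Qed.

Lemma part4_aux (x : Kstar) : exists s : seq (KK * Kstar),
  (forall ku, ku \in s -> U ku.2) /\
  (forall g, inT l p g.1 -> coef (ksum [seq kmul (kembed ku.1) ku.2 | ku <- s]) g = coef x g) /\
  (forall g, ~ inT l p g.1 -> coef (ksum [seq kmul (kembed ku.1) ku.2 | ku <- s]) g = 0).
Proof.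
elim: x => [|[k g0] x [s [hs [h1 h2]]]].
  by exists [::]; split => //; split => g _; rewrite /ksum /= !coef_nil.
case: (classic (inT l p g0.1)) => hg0.
  have [a [a0 ua]] := single_all hg0.
  exists ((k / a, [:: (a, g0)]) :: s); split.
    by move=> uk; rewrite in_cons => /predU1P [-> //|]; apply: hs.
  have E : kmul (kembed (k / a)) [:: (a, g0)] = [:: (k, g0)].
    by rewrite /Defs.kmul /kembed /= gmul1g actK_gone divfK.
  split => g hg; rewrite map_cons coef_ksum_cons E coef_cons coef_nil addr0.
    by rewrite h1 // coef_cons.
  rewrite h2 // addr0; case: (g0 =P g) => // e; by case: hg; rewrite -e.
exists s; split => //; split => g hg; last exact: h2.
rewrite coef_cons h1 //; case: (g0 =P g) => [e|_]; last by rewrite add0r.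
by case: hg0; rewrite e.
Qed.
End Ch.

Unset Implicit Arguments.
Set Strict Implicit.

Theorem proposition3p13 (F : numClosedFieldType) (l p n : nat)
    (zeta hb c : F) (cm : nat -> F) :
  (0 < l)%N -> (0 < p)%N -> (0 < n)%N -> (p %| l)%N ->
  l.-primitive_root zeta -> hb != 0 ->
  (forall m : nat, ~~ (p %| m)%N -> cm m = 0) ->
  let U := @inU F l p n zeta hb c cm in
  (* U is a subring of scr K = K * (T x| S_n) *)
  (forall u, U u -> @inKT F n l p u) /\
  (* U contains Gamma = F[U_1..U_n] *)
  (forall q : {mpoly F[n]}, exists u : Kstar F n, U u /\ keq u (kembed (tofrac q))) /\
  (* U K = scr K *)
  (forall x : Kstar F n, @inKT F n l p x ->
     exists s : seq (Kstar F n * KK F n),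
       (forall uk, uk \in s -> U uk.1) /\
       keq x (ksum [seq kmul hb uk.1 (kembed uk.2) | uk <- s])) /\
  (* K U = scr K *)
  (forall x : Kstar F n, @inKT F n l p x ->
     exists s : seq (KK F n * Kstar F n),
       (forall ku, ku \in s -> U ku.2) /\
       keq x (ksum [seq kmul hb (kembed ku.1) ku.2 | ku <- s])).
Proof.
move=> l0 p0 n0 pl zr hb0 hcm U.
split; first exact: part1.
split; first exact: part2.
split.
- move=> x hx.
  have [s [hs [h1 h2]]] := part3_aux l p zeta hb c cm n0 x.
  exists s; split => // g.
  case: (classic (inT l p g.1)) => h; first by rewrite h1.
  rewrite h2 //; have [->|/hx hh] := eqVneq (coef x g) 0; [by [] | by case: h].
- move=> x hx.
  have [s [hs [h1 h2]]] := part4_aux l p zeta hb c cm n0 x.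
  exists s; split => // g.
  case: (classic (inT l p g.1)) => h; first by rewrite h1.
  rewrite h2 //; have [->|/hx hh] := eqVneq (coef x g) 0; [by [] | by case: h].
Qed.
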